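(* Let $\mathcal C$ be a closed curve and $P_1,P_2,\dots,P_N$ distinct points on $\mathcal C$ listed in cyclic order around $\mathcal C$, with the convention $P_{N+1}=P_1$ and $P_{N+2}=P_2$. Assume there are positive constants $A_0$ and $R_0$ such that (a) for all $j\in\{1,\dots,N\}$, $\frac{A_0}{2}\le\mathrm{Area}(\triangle P_jP_{j+1}P_{j+2})$; (b) for each $j\in\{1,\dots,N\}$ the points $P_j,P_{j+1},P_{j+2}$ lie on a circle of radius $\ge R_0$. Then $$N<\frac{\mathrm{Length}(\mathcal C)}{(A_0R_0)^{1/3}}.$$ *)

(* Defs.v *)
From HB Require Import structures.
From mathcomp Require Import all_boot all_order all_algebra.
From mathcomp Require Import all_classical all_reals all_analysis.
Set Implicit Arguments. Unset Strict Implicit. Unset Printing Implicit Defensive.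
Import Order.TTheory GRing.Theory Num.Theory.
Import numFieldNormedType.Exports.
Local Open Scope classical_set_scope.
Local Open Scope ring_scope.

Definition edist {R : realType} (p q : R * R) : R :=
  Num.sqrt ((p.1 - q.1) ^+ 2 + (p.2 - q.2) ^+ 2).

Definition tri_area {R : realType} (a b c : R * R) : R :=
  `| (b.1 - a.1) * (c.2 - a.2) - (b.2 - a.2) * (c.1 - a.1) | / 2.

Definition closed_curve {R : realType} (g : R -> R * R) : Prop :=
  {within `[0, 1], continuous g} /\ g 0 = g 1.

Fixpoint poly_len {R : realType} (s : seq (R * R)) : R :=
  match s with
  | x :: ((y :: _) as t) => edist x y + poly_len t
  | _ => 0
  end.

Definition curve_length {R : realType} (g : R -> R * R) : \bar R :=
  ereal_sup [set (poly_len (map g (0 :: rcons s 1)))%:E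
            | s in [set s : seq R | sorted <=%R s /\ all (fun t => (0 <= t <= 1)) s]].

Definition on_circle_radius_ge {R : realType} (R0 : R) (a b c : R * R) : Prop :=
  exists (o : R * R) (r : R), R0 <= r /\
    edist o a = r /\ edist o b = r /\ edist o c = r.

(* Main.v *)
Require Import Defs.
From HB Require Import structures.
From mathcomp Require Import all_boot all_order all_algebra.
From mathcomp Require Import all_classical all_reals all_analysis.
From mathcomp Require Import ring lra.
Import Order.TTheory GRing.Theory Num.Theory.
Local Open Scope ring_scope.
Set Implicit Arguments. Unset Strict Implicit.

Section Aux.
Variable R : realType.

Lemma tri_gen (x y z d c : R) : 0 <= x -> 0 <= y -> 0 <= z ->
  z ^+ 2 = x ^+ 2 + y ^+ 2 + 2 * d -> x ^+ 2 * y ^+ 2 = d ^+ 2 + c ^+ 2 ->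
  z <= x + y.
Proof.
move=> hx hy hz hz2 hl.
have hd : d <= x * y.
  have : d ^+ 2 <= (x * y) ^+ 2 by rewrite exprMn hl; nra.
  have hxy : 0 <= x * y by nra.
  nra.
nra.
Qed.

Lemma tri_gen_strict (x y z d c : R) : 0 <= x -> 0 <= y -> 0 <= z ->
  z ^+ 2 = x ^+ 2 + y ^+ 2 + 2 * d -> x ^+ 2 * y ^+ 2 = d ^+ 2 + c ^+ 2 ->
  c != 0 -> z < x + y.
Proof.
move=> hx hy hz hz2 hl hc.
have hc2 : 0 < c ^+ 2 by rewrite lt_def sqr_ge0 sqrf_eq0 hc.
have hd : d < x * y.
  have : d ^+ 2 < (x * y) ^+ 2 by rewrite exprMn hl; nra.
  have hxy : 0 <= x * y by nra.
  nra.
nra.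
Qed.

Lemma edist_sqr (p q : R * R) :
  Defs.edist p q ^+ 2 = (p.1 - q.1) ^+ 2 + (p.2 - q.2) ^+ 2.
Proof. by rewrite /Defs.edist sqr_sqrtr // addr_ge0 // sqr_ge0. Qed.

Lemma edist_ge0 (p q : R * R) : 0 <= Defs.edist p q.
Proof. exact: sqrtr_ge0. Qed.

Lemma edistC (p q : R * R) : Defs.edist p q = Defs.edist q p.
Proof. by rewrite /Defs.edist; congr Num.sqrt; ring. Qed.

Lemma edist_tri (p m q : R * R) : Defs.edist p q <= Defs.edist p m + Defs.edist m q.
Proof.
apply: (@tri_gen _ _ _ ((m.1 - p.1) * (q.1 - m.1) + (m.2 - p.2) * (q.2 - m.2))
  ((m.1 - p.1) * (q.2 - m.2) - (m.2 - p.2) * (q.1 - m.1)));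
  rewrite ?edist_ge0 ?edist_sqr //; ring.
Qed.

Lemma edist_tri_strict (p m q : R * R) :
  (m.1 - p.1) * (q.2 - m.2) - (m.2 - p.2) * (q.1 - m.1) != 0 ->
  Defs.edist p q < Defs.edist p m + Defs.edist m q.
Proof.
apply: (@tri_gen_strict _ _ _ ((m.1 - p.1) * (q.1 - m.1) + (m.2 - p.2) * (q.2 - m.2)));
  rewrite ?edist_ge0 ?edist_sqr //; ring.
Qed.

Lemma core (w1 w2 u1 u2 v1 v2 r2 : R) :
  w1 ^+ 2 + w2 ^+ 2 = r2 -> (w1 - u1) ^+ 2 + (w2 - u2) ^+ 2 = r2 ->
  (w1 - v1) ^+ 2 + (w2 - v2) ^+ 2 = r2 ->
  (u1 ^+ 2 + u2 ^+ 2) * (v1 ^+ 2 + v2 ^+ 2) * ((v1 - u1) ^+ 2 + (v2 - u2) ^+ 2)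
  = 4 * (u1 * v2 - u2 * v1) ^+ 2 * r2.
Proof.
move=> H1 H2 H3.
have E1 : u1 ^+ 2 + u2 ^+ 2 = 2 * (w1 * u1 + w2 * u2) by lra.
have E2 : v1 ^+ 2 + v2 ^+ 2 = 2 * (w1 * v1 + w2 * v2) by lra.
have E3 : 2 * w1 * (u1 * v2 - u2 * v1) =
  (u1 ^+ 2 + u2 ^+ 2) * v2 - (v1 ^+ 2 + v2 ^+ 2) * u2 by rewrite E1 E2; ring.
have E4 : 2 * w2 * (u1 * v2 - u2 * v1) =
  u1 * (v1 ^+ 2 + v2 ^+ 2) - v1 * (u1 ^+ 2 + u2 ^+ 2) by rewrite E1 E2; ring.
rewrite -H1.
transitivity (((u1 ^+ 2 + u2 ^+ 2) * v2 - (v1 ^+ 2 + v2 ^+ 2) * u2) ^+ 2 +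
   (u1 * (v1 ^+ 2 + v2 ^+ 2) - v1 * (u1 ^+ 2 + u2 ^+ 2)) ^+ 2); first ring.
rewrite -E3 -E4; ring.
Qed.

Lemma triangle_key (A0 R0 : R) (a b c : R * R) : 0 < A0 -> 0 < R0 ->
  A0 / 2 <= tri_area a b c -> on_circle_radius_ge R0 a b c ->
  A0 * R0 < ((Defs.edist a b + Defs.edist b c) / 2) ^+ 3.
Proof.
move=> hA hR harea; case=> o; case=> r; case=> hRr; case=> ha; case=> hb hc.
set cr := (b.1 - a.1) * (c.2 - a.2) - (b.2 - a.2) * (c.1 - a.1).
have hcr : A0 <= `|cr|.
  by move: harea; rewrite /tri_area -/cr ler_pM2r // invr_gt0.
have hcr0 : cr != 0 by rewrite -normr_gt0; lra.
have hr0 : 0 <= r by rewrite -ha edist_ge0.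
have ha2 := edist_sqr o a; have hb2 := edist_sqr o b; have hc2 := edist_sqr o c.
rewrite ha in ha2; rewrite hb in hb2; rewrite hc in hc2.
set x := Defs.edist a b; set y := Defs.edist b c; set z := Defs.edist a c.
have hx := edist_ge0 a b; have hy := edist_ge0 b c; have hz := edist_ge0 a c.
have hprod : (x * y * z) ^+ 2 = (2 * `|cr| * r) ^+ 2.
  rewrite !exprMn /x /y /z !edist_sqr real_normK ?num_real //.
  have H := @core (o.1 - a.1) (o.2 - a.2) (b.1 - a.1) (b.2 - a.2)
    (c.1 - a.1) (c.2 - a.2) (r ^+ 2).
  transitivity (4 * cr ^+ 2 * r ^+ 2); last by ring.
  rewrite /cr -H; first ring.
  - by rewrite ha2.
  - by rewrite hb2; ring.
  - by rewrite hc2; ring.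
have hcr1 : 0 <= `|cr| by [].
have hxyz : x * y * z = 2 * `|cr| * r.
  have h0 : 0 <= x * y * z by rewrite !mulr_ge0.
  have h1 : 0 <= 2 * `|cr| * r by rewrite !mulr_ge0.
  apply/le_anti/andP; split; nra.
have hzs : z < x + y.
  rewrite /z /x /y; apply: edist_tri_strict.
  by have -> : (b.1 - a.1) * (c.2 - b.2) - (b.2 - a.2) * (c.1 - b.1) = cr by rewrite /cr; ring.
have h1 : A0 * R0 <= `|cr| * r by apply: ler_pM => //; lra.
have hxy : 0 < x * y.
  rewrite lt_def mulr_ge0 // andbT; apply/eqP => e.
  by move: hxyz; rewrite e mul0r => e2; nra.
have h2 : x * y * z < x * y * (x + y) by rewrite ltr_pM2l.
have h3 : x * y * (x + y) <= 2 * ((x + y) / 2) ^+ 3.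
  have e : 2 * ((x + y) / 2) ^+ 3 = x * y * (x + y) + (x + y) * (x - y) ^+ 2 / 4 by field.
  rewrite e lerDl; apply: mulr_ge0; last by [].
  by rewrite mulr_ge0 ?sqr_ge0 ?addr_ge0.
lra.
Qed.
End Aux.

Section Poly.
Variable R : realType.

Lemma poly_len_cons (a b : R * R) l :
  poly_len (a :: b :: l) = Defs.edist a b + poly_len (b :: l).
Proof. by []. Qed.

Lemma poly_len_rcons (a y : R * R) l :
  poly_len (rcons (a :: l) y) = poly_len (a :: l) + Defs.edist (last a l) y.
Proof.
elim: l a => [|b l IH] a; first by rewrite /= add0r addr0.
have -> : rcons (a :: b :: l) y = a :: b :: rcons l y by [].
by rewrite poly_len_cons -rcons_cons IH poly_len_cons addrA.
Qed.

Lemma poly_len_iota (f : nat -> R * R) m n :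
  poly_len (map f (iota m n.+1)) = \sum_(0 <= i < n) Defs.edist (f (m + i)%N) (f (m + i)%N.+1).
Proof.
elim: n m => [|n IH] m; first by rewrite big_geq.
rewrite (_ : map f (iota m n.+2) = f m :: f m.+1 :: map f (iota m.+2 n)) //.
rewrite poly_len_cons.
have := IH m.+1; rewrite /= => ->.
rewrite big_nat_recl // addn0; congr (_ + _).
by apply: eq_bigr => i _; rewrite addSnnS.
Qed.

Lemma last_map_iota (f : nat -> R * R) m n :
  last (f m) (map f (iota m.+1 n)) = f (m + n)%N.
Proof.
elim: n m => [|n IH] m /=; first by rewrite addn0.
by rewrite IH addSnnS.
Qed.

Lemma cube_mono (s k : R) : 0 <= s -> s <= k -> s ^+ 3 <= k ^+ 3.
Proof.
move=> hs hsk; rewrite -subr_ge0.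
have -> : k ^+ 3 - s ^+ 3 = (k - s) * (k ^+ 2 + k * s + s ^+ 2) by ring.
apply: mulr_ge0; first lra.
have hk : 0 <= k by lra.
by rewrite !addr_ge0 ?sqr_ge0 ?mulr_ge0.
Qed.

End Poly.

Theorem theorem3p2 (R : realType) (g : R -> R * R) (N : nat)
    (P : nat -> R * R) (t : nat -> R) (A0 R0 : R) :
  closed_curve g ->
  (1 <= N)%N ->
  (* cyclic order: P_j = g(t_j) with 0 <= t_0 < t_1 < ... < t_{N-1} < 1 *)
  (forall j, (j < N)%N -> 0 <= t j < 1 /\ P j = g (t j)) ->
  (forall i j, (i < j < N)%N -> t i < t j) ->
  (* distinct points *)
  (forall i j, (i < N)%N -> (j < N)%N -> i <> j -> P i <> P j) ->
  0 < A0 -> 0 < R0 ->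
  (forall j, (j < N)%N ->
     A0 / 2 <= tri_area (P j) (P ((j + 1) %% N)%N) (P ((j + 2) %% N)%N)) ->
  (forall j, (j < N)%N ->
     on_circle_radius_ge R0 (P j) (P ((j + 1) %% N)%N) (P ((j + 2) %% N)%N)) ->
  ((N%:R)%:E < curve_length g * ((A0 * R0) `^ (3^-1))^-1%:E)%E.
Proof.
move=> [_ hg01] hN ht hmono _ hA hR harea hcirc.
have [n eN] : exists n, N = n.+1 by exists N.-1; rewrite prednK.
subst N.
have hAR : 0 < A0 * R0 by rewrite mulr_gt0.
set k := (A0 * R0) `^ 3^-1.
have hk0 : 0 < k by rewrite powR_gt0.
have hk3 : k ^+ 3 = A0 * R0.
  rewrite -powR_mulrn ?ltW // /k -powRrM mulVf ?powRr1 ?ltW //.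
set x := fun j => Defs.edist (P j) (P ((j + 1) %% n.+1)%N).
have hstep : forall j, (j < n.+1)%N -> 2 * k < x j + x ((j + 1) %% n.+1)%N.
  move=> j hj.
  have := triangle_key hA hR (harea j hj) (hcirc j hj).
  have e : (((j + 1) %% n.+1 + 1) %% n.+1 = (j + 2) %% n.+1)%N
    by rewrite modnDml -addnA.
  rewrite /x e -hk3 => H.
  set s := (_ + _) / 2 in H.
  have hs0 : 0 <= s by rewrite divr_ge0 // addr_ge0 // edist_ge0.
  have : k < s.
    rewrite ltNge; apply/negP => hsk.
    have := cube_mono hs0 hsk; lra.
  rewrite /s; lra.
have hrot : \sum_(0 <= j < n.+1) x ((j + 1) %% n.+1)%N = \sum_(0 <= j < n.+1) x j.
  rewrite big_nat_recr //= addn1 modnn big_nat_recl //= addrC; congr (_ + _).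
  apply: eq_big_nat => i /andP [_ hi]; by rewrite modn_small ?addn1.
have hsum : 2 * k * n.+1%:R < 2 * \sum_(0 <= j < n.+1) x j.
  have := @ltr_sum_nat R 0 n.+1 (fun _ => 2 * k) (fun j => x j + x ((j + 1) %% n.+1)%N)
    (ltn0Sn n) (fun j hj => hstep j (proj2 (andP hj))).
  rewrite sumr_const_nat subn0 big_split /= hrot -mulr_natr => H.
  lra.
set s := mkseq t n.+1.
have hsin : sorted <=%R s /\ all (fun t => (0 <= t <= 1)) s.
  split.
    apply/(sortedP 0) => i; rewrite size_mkseq => hi.
    rewrite !nth_mkseq // ?(ltnW hi) //.
    by apply/ltW/hmono; rewrite leqnn.
  apply/allP => y; rewrite /s /mkseq => /mapP [i]; rewrite mem_iota => /andP [_ hi] ->.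
  by have [/andP [h0 h1] _] := ht i hi; rewrite h0 ltW.
set L := poly_len (map g (0 :: rcons s 1)).
have hcl : (L%:E <= curve_length g)%E.
  by apply: ereal_sup_ubound; exists s.
have hpoly : \sum_(0 <= j < n.+1) x j <= L.
  have eP : forall j, (j <= n)%N -> g (t j) = P j by move=> j hj; rewrite (proj2 (ht j _)).
  have -> : L = poly_len (g 0 :: g (t 0%N) :: rcons (map (g \o t) (iota 1 n)) (g 1))
    by rewrite /L /s /mkseq /= map_rcons -map_comp.
  rewrite poly_len_cons -rcons_cons poly_len_rcons.
  rewrite (_ : g (t 0%N) :: map (g \o t) (iota 1 n) = map (g \o t) (iota 0 n.+1)) //.
  rewrite poly_len_iota (_ : g (t 0%N) = (g \o t) 0%N) // last_map_iota /=.
  have ex : x n = Defs.edist (P n) (P 0%N) by rewrite /x addn1 modnn.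
  rewrite big_nat_recr //= ex add0n.
  have -> : \sum_(0 <= i < n) x i = \sum_(0 <= i < n) Defs.edist (g (t (0 + i)%N)) (g (t (0 + i)%N.+1)).
    apply: eq_big_nat => i /andP [_ hi]; rewrite add0n.
    by rewrite /x eP ?(ltnW hi) // eP // modn_small ?addn1 // ltnS ltnW.
  have := edist_tri (P n) (g 1) (P 0%N).
  rewrite -hg01 eP // eP // (edistC (g 0) (P 0%N)).
  lra.
apply: (@lt_le_trans _ _ ((L * k^-1)%:E)).
  rewrite lte_fin ltr_pdivlMr //; lra.
rewrite EFinM; apply: lee_wpmul2r => //.
by rewrite lee_fin invr_ge0 ltW.
Qed.
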